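(* Let $T>0$, $d\ge 1$, $\gamma\in(0,\infty)$, let $f,h,g:[0,T]\to\mathbb{R}$ be continuous functions, and let $\mathbf{m},x_0,x_T\in\mathbb{R}^d$ be fixed vectors. Consider the deterministic optimal control problem $$\min_{\mathbf{u}_{\cdot,\gamma}}\ \int_0^T \tfrac12\|\mathbf{u}_{t,\gamma}\|_2^2\,dt+\tfrac{\gamma}{2}\|\mathbf{x}_T^u-x_T\|_2^2$$ over controls $\mathbf{u}_{\cdot,\gamma}:[0,T]\to\mathbb{R}^d$, subject to the dynamics $$\frac{d\mathbf{x}_t}{dt}=f_t\mathbf{x}_t+h_t\mathbf{m}+g_t\mathbf{u}_{t,\gamma},\qquad \mathbf{x}_0^u=x_0,$$ where $\mathbf{x}^u_t$ denotes the resulting state trajectory. Define $\bar f_{s:t}=\int_s^t f_z\,dz$, $\bar f_t=\bar f_{0:t}$, $\bar h_{s:t}=\int_s^t e^{-\bar f_z}h_z\,dz$, $\bar h_t=\bar h_{0:t}$, $\bar g^2_{s:t}=\int_s^t e^{-2\bar f_z}g_z^2\,dz$, $\bar g^2_t=\bar g^2_{0:t}$, and $d_{t,\gamma}=\gamma^{-1}+e^{2\bar f_T}\bar g^2_{t:T}$. Then the optimal controller, written in terms of the current state $\mathbf{x}_t$ of the optimal trajectory, is $$\mathbf{u}^*_{t,\gamma}=g_t e^{\bar f_{t:T}}\,\frac{x_T-e^{\bar f_{t:T}}\mathbf{x}_t-\mathbf{m}\,e^{\bar f_T}\bar h_{t:T}}{d_{t,\gamma}},$$ and the optimal trajectory is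 given, for all $t\in[0,T]$, by $$\mathbf{x}_t=e^{\bar f_t}\left(\frac{d_{t,\gamma}}{d_{0,\gamma}}x_0+\frac{e^{\bar f_T}\bar g^2_t}{d_{0,\gamma}}x_T+\Big(\bar h_t-\frac{e^{2\bar f_T}\bar h_T\bar g^2_t}{d_{0,\gamma}}\Big)\mathbf{m}\right).$$
   Context: All norms are Euclidean. The quantity $\gamma$ is the terminal penalty coefficient; $x_0$ is the prescribed initial state and $x_T$ the prescribed target terminal point. *)

(* Defs.v *)
From Stdlib Require Import Reals Lra.
From Coquelicot Require Import Coquelicot.
Open Scope R_scope.

(* Vectors of R^d are represented as functions nat -> R, of which only the
   components i < d are relevant. *)
Definition vec := nat -> R.

Definition sqnorm (d : nat) (v : vec) : R :=
  sum_f_R0 (fun i => (v i) ^ 2) (pred d).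

Definition cont_on (a b : R) (phi : R -> R) : Prop :=
  forall t, a <= t <= b ->
    filterlim phi (within (fun z => a <= z <= b) (locally t)) (locally (phi t)).

Definition fbar (f : R -> R) (s t : R) : R := RInt f s t.
Definition hbar (f h : R -> R) (s t : R) : R :=
  RInt (fun z => exp (- fbar f 0 z) * h z) s t.
Definition g2bar (f g : R -> R) (s t : R) : R :=
  RInt (fun z => exp (-2 * fbar f 0 z) * (g z) ^ 2) s t.
Definition dgam (T gam : R) (f g : R -> R) (t : R) : R :=
  / gam + exp (2 * fbar f 0 T) * g2bar f g t T.

Definition admissible_control (d : nat) (T : R) (u : R -> vec) : Prop :=
  forall i, (i < d)%nat -> cont_on 0 T (fun t => u t i).

Definition is_trajectory (d : nat) (T : R) (f h g : R -> R) (m x0 : vec)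
    (u : R -> vec) (x : R -> vec) : Prop :=
  forall i, (i < d)%nat ->
    cont_on 0 T (fun t => x t i) /\ x 0 i = x0 i /\
    forall t, 0 < t < T ->
      is_derive (fun s => x s i) t (f t * x t i + h t * m i + g t * u t i).

Definition cost (d : nat) (T gam : R) (xT : vec) (u : R -> vec) (x : R -> vec) : R :=
  RInt (fun t => / 2 * sqnorm d (u t)) 0 T
  + gam / 2 * sqnorm d (fun i => x T i - xT i).

Definition xstar (T gam : R) (f h g : R -> R) (m x0 xT : vec) (t : R) : vec :=
  fun i =>
    exp (fbar f 0 t) *
    (dgam T gam f g t / dgam T gam f g 0 * x0 i
     + exp (fbar f 0 T) * g2bar f g 0 t / dgam T gam f g 0 * xT i
     + (hbar f h 0 t
        - exp (2 * fbar f 0 T) * hbar f h 0 T * g2bar f g 0 t / dgam T gam f g 0)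
       * m i).

Definition ustar (T gam : R) (f h g : R -> R) (m xT : vec) (x : R -> vec) (t : R) : vec :=
  fun i =>
    g t * exp (fbar f t T) *
    ((xT i - exp (fbar f t T) * x t i - m i * exp (fbar f 0 T) * hbar f h t T)
     / dgam T gam f g t).

(* Main.v *)
Require Import Defs.
From Stdlib Require Import Reals Lra Lia.
From Coquelicot Require Import Coquelicot.
Open Scope R_scope.

Definition clamp (T t : R) := Rmax 0 (Rmin T t).
Definition ext (T : R) (phi : R -> R) (t : R) := phi (clamp T t).

Lemma clamp_in T t : 0 <= T -> 0 <= clamp T t <= T.
Proof. intros; unfold clamp, Rmax, Rmin; repeat destruct Rle_dec; lra. Qed.

Lemma clamp_id T t : 0 <= t <= T -> clamp T t = t.
Proof. intros; unfold clamp, Rmax, Rmin; repeat destruct Rle_dec; lra. Qed.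

Lemma clamp_lip T s t : 0 <= T -> Rabs (clamp T s - clamp T t) <= Rabs (s - t).
Proof. intros; unfold clamp, Rmax, Rmin; repeat destruct Rle_dec; split_Rabs; lra. Qed.

Lemma ext_cont T phi : 0 <= T -> cont_on 0 T phi -> forall t, continuous (ext T phi) t.
Proof.
  intros HT Hc t. unfold continuous, ext.
  eapply filterlim_comp; [| apply (Hc (clamp T t) (clamp_in T t HT))].
  intros P [eps HP]. exists eps. intros s Hs. apply HP.
  - unfold ball in *; simpl in *; unfold AbsRing_ball in *; simpl in *.
    unfold abs, minus, plus, opp in *; simpl in *.
    eapply Rle_lt_trans; [apply clamp_lip; lra| exact Hs].
  - apply clamp_in; lra.
Qed.

Lemma cont_on_eq T phi psi : (forall t, 0 <= t <= T -> phi t = psi t) ->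
  (forall t, 0 <= t <= T -> continuous psi t) -> cont_on 0 T phi.
Proof.
  intros He Hc t Ht. rewrite (He t Ht).
  apply (filterlim_within_ext _ psi phi).
  { intros x Hx; symmetry; apply He; exact Hx. }
  eapply filterlim_filter_le_1; [apply filter_le_within| apply Hc; exact Ht].
Qed.

Lemma cont_on_ext T phi : 0 <= T -> cont_on 0 T phi -> cont_on 0 T (ext T phi).
Proof. intros HT H; apply (cont_on_eq T _ (ext T phi)); auto; intros; apply ext_cont; auto. Qed.

Lemma cont_on_cont T psi : (forall t, 0 <= t <= T -> continuous psi t) -> cont_on 0 T psi.
Proof. intros; apply (cont_on_eq T _ psi); auto. Qed.

Lemma cont_on_mult T a b : 0 <= T -> cont_on 0 T a -> cont_on 0 T b -> cont_on 0 T (fun t => a t * b t).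
Proof.
  intros HT Ha Hb. apply (cont_on_eq T _ (fun t => ext T a t * ext T b t)).
  - intros; unfold ext; rewrite clamp_id; auto.
  - intros; apply (continuous_mult (ext T a) (ext T b)); apply ext_cont; auto.
Qed.

Lemma cont_on_plus T a b : 0 <= T -> cont_on 0 T a -> cont_on 0 T b -> cont_on 0 T (fun t => a t + b t).
Proof.
  intros HT Ha Hb. apply (cont_on_eq T _ (fun t => ext T a t + ext T b t)).
  - intros; unfold ext; rewrite clamp_id; auto.
  - intros; apply (continuous_plus (ext T a) (ext T b)); apply ext_cont; auto.
Qed.

Lemma cont_on_const T c : cont_on 0 T (fun _ => c).
Proof. apply cont_on_cont; intros; apply continuous_const. Qed.

Lemma cont_on_ex_RInt T phi : 0 <= T -> cont_on 0 T phi -> forall a b, 0 <= a <= T -> 0 <= b <= T -> ex_RInt phi a b.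
Proof.
  intros HT H a b Ha Hb. apply (ex_RInt_ext (ext T phi)).
  - intros x Hx; unfold ext; rewrite clamp_id; auto.
    split; [apply Rle_trans with (Rmin a b)| apply Rle_trans with (Rmax a b)];
    try lra; unfold Rmin, Rmax; destruct Rle_dec; lra.
  - apply (@ex_RInt_continuous R_CompleteNormedModule); intros; apply ext_cont; auto.
Qed.

Lemma cont_interior T phi t : 0 <= T -> cont_on 0 T phi -> 0 < t < T -> continuous phi t.
Proof.
  intros HT H Ht. apply (continuous_ext_loc phi (ext T phi)).
  - apply locally_interval with (a := Finite 0) (b := Finite T); simpl; try lra.
    intros; unfold ext; rewrite clamp_id; auto; lra.
  - apply ext_cont; auto.
Qed.
Lemma RInt_cont_derive (p : R -> R) : (forall t, continuous p t) ->
  forall t, is_derive (fun s => RInt p 0 s) t (p t).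
Proof.
  intros Hc t. apply (is_derive_RInt p (fun s => RInt p 0 s) 0 t); [|apply Hc].
  apply filter_forall; intros b; apply (@RInt_correct R_CompleteNormedModule p 0 b).
  apply (@ex_RInt_continuous R_CompleteNormedModule); intros; apply Hc.
Qed.

Lemma ftc T X phi : 0 < T -> cont_on 0 T X -> cont_on 0 T phi ->
  (forall t, 0 < t < T -> is_derive X t (phi t)) -> X T - X 0 = RInt phi 0 T.
Proof.
  intros HT HX Hp Hd.
  set (pe := ext T phi).
  assert (Hpe : forall t, continuous pe t) by (apply ext_cont; auto; lra).
  assert (HI := RInt_cont_derive pe Hpe).
  set (D := fun t => ext T X t - RInt pe 0 t).
  destruct (MVT_gen D 0 T (fun _ => 0)) as [c [_ Hc]].
  - rewrite Rmin_left, Rmax_right by lra. intros t Ht.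
    assert (H1 : is_derive (ext T X) t (phi t)).
    { apply (is_derive_ext_loc X). 
      - apply locally_interval with (a := Finite 0) (b := Finite T); simpl; try lra.
        intros; unfold ext; rewrite clamp_id; auto; lra.
      - apply Hd; auto. }
    assert (H2 := is_derive_minus _ _ _ _ _ H1 (HI t)).
    replace 0 with (minus (phi t) (pe t)). exact H2.
    unfold pe, ext; rewrite clamp_id by lra. unfold minus, plus, opp; simpl; ring.
  - intros t _. apply continuity_pt_filterlim.
    apply (continuous_minus (ext T X) (fun s => RInt pe 0 s)).
    + apply ext_cont; auto; lra.
    + apply ex_derive_continuous. eexists; apply HI.
  - unfold D in Hc. rewrite RInt_point in Hc.
    unfold ext in Hc; rewrite !clamp_id in Hc by lra.
    replace (RInt phi 0 T) with (RInt pe 0 T). unfold zero in Hc; simpl in Hc. lra.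
    apply RInt_ext. rewrite Rmin_left, Rmax_right by lra. intros; unfold pe, ext; rewrite clamp_id; auto; lra.
Qed.

Lemma RInt_plus_R (p q : R -> R) a b : ex_RInt p a b -> ex_RInt q a b ->
  RInt (fun s => p s + q s) a b = RInt p a b + RInt q a b.
Proof. intros; apply (@RInt_plus R_CompleteNormedModule); auto. Qed.

Lemma RInt_scal_R (p : R -> R) a b c : ex_RInt p a b ->
  RInt (fun s => c * p s) a b = c * RInt p a b.
Proof. intros; apply (@RInt_scal R_CompleteNormedModule); auto. Qed.

Lemma ex_RInt_plus_R (p q : R -> R) a b : ex_RInt p a b -> ex_RInt q a b ->
  ex_RInt (fun s => p s + q s) a b.
Proof. intros; apply (@ex_RInt_plus R_NormedModule); auto. Qed.

Lemma ex_RInt_scal_R (p : R -> R) a b c : ex_RInt p a b -> ex_RInt (fun s => c * p s) a b.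
Proof. intros; apply (@ex_RInt_scal R_NormedModule); auto. Qed.

Lemma ex_RInt_cont (p : R -> R) a b : (forall t, continuous p t) -> ex_RInt p a b.
Proof. intros; apply (@ex_RInt_continuous R_CompleteNormedModule); auto. Qed.

Lemma RInt_split T (p q : R -> R) : (forall t, continuous p t) ->
  (forall z, 0 <= z <= T -> q z = p z) -> forall t, 0 <= t <= T ->
  RInt q 0 t = RInt p 0 t /\ RInt q t T = RInt p 0 T - RInt p 0 t.
Proof.
  intros Hc He t Ht. split.
  - apply RInt_ext. rewrite Rmin_left, Rmax_right by lra. intros; apply He; lra.
  - rewrite (RInt_ext q p t T).
    + assert (Hch : (RInt p 0 t : R) + RInt p t T = RInt p 0 T).
      { apply (@RInt_Chasles R_CompleteNormedModule); apply ex_RInt_cont; auto. }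
      lra.
    + rewrite Rmin_left, Rmax_right by lra. intros; apply He; lra.
Qed.

Lemma RInt_sum (u : R -> vec) T n :
  (forall i, (i <= n)%nat -> ex_RInt (fun t => (u t i)^2) 0 T) ->
  ex_RInt (fun t => sum_f_R0 (fun i => (u t i)^2) n) 0 T /\
  RInt (fun t => sum_f_R0 (fun i => (u t i)^2) n) 0 T =
  sum_f_R0 (fun i => RInt (fun t => (u t i)^2) 0 T) n.
Proof.
  induction n; intros H.
  - split; [apply H; lia| reflexivity].
  - destruct IHn as [IH1 IH2]; [intros; apply H; lia|].
    change (ex_RInt (fun t => sum_f_R0 (fun i => (u t i)^2) n + (u t (S n))^2) 0 T /\
      RInt (fun t => sum_f_R0 (fun i => (u t i)^2) n + (u t (S n))^2) 0 T =
      sum_f_R0 (fun i => RInt (fun t => (u t i)^2) 0 T) n + RInt (fun t => (u t (S n))^2) 0 T).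
    split.
    + apply ex_RInt_plus_R; auto.
    + rewrite (RInt_plus_R (fun t => sum_f_R0 (fun i => u t i ^ 2) n) (fun t => u t (S n) ^ 2)); auto. rewrite IH2; auto.
Qed.

Lemma cost_split d T gam xT u x :
  (forall i, (i <= pred d)%nat -> ex_RInt (fun t => (u t i)^2) 0 T) ->
  cost d T gam xT u x = sum_f_R0 (fun i => / 2 * RInt (fun t => (u t i)^2) 0 T
                              + gam / 2 * (x T i - xT i)^2) (pred d).
Proof.
  intros H. destruct (RInt_sum u T (pred d) H) as [H1 H2].
  unfold cost, sqnorm. rewrite RInt_scal_R by auto. rewrite H2.
  rewrite plus_sum, !scal_sum. f_equal; apply sum_eq; intros; ring.
Qed.



Lemma cont_on_pow2 T a : 0 <= T -> cont_on 0 T a -> cont_on 0 T (fun t => a t ^ 2).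
Proof.
  intros HT Ha. apply (cont_on_eq T _ (fun t => ext T a t * ext T a t)).
  - intros t0 Ht0; unfold ext. cbv beta. rewrite clamp_id by auto. simpl. rewrite Rmult_1_r. reflexivity.
  - intros; apply (continuous_mult (ext T a) (ext T a)); apply ext_cont; auto.
Qed.

Lemma cont_on_minus T a b : 0 <= T -> cont_on 0 T a -> cont_on 0 T b -> cont_on 0 T (fun t => a t - b t).
Proof.
  intros HT Ha Hb. apply (cont_on_eq T _ (fun t => ext T a t - ext T b t)).
  - intros; unfold ext; rewrite !clamp_id by auto; reflexivity.
  - intros; apply (continuous_minus (ext T a) (ext T b)); apply ext_cont; auto.
Qed.

Lemma deriv_cont_R (F : R -> R) x l : is_derive F x l -> continuous F x.
Proof. intros H. apply (@ex_derive_continuous R_AbsRing R_NormedModule). exists l; exact H. Qed.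

Ltac toR := match goal with |- @eq _ ?x ?y => change (@eq R x y) end.

Lemma is_derive_eq (F : R -> R) t l l' : is_derive F t l -> l = l' -> is_derive F t l'.
Proof. intros H <-; exact H. Qed.

Lemma loc_int T t : 0 < t < T -> forall (P : R -> Prop), (forall s, 0 < s < T -> P s) -> locally t P.
Proof.
  intros Ht P HP. apply locally_interval with (a := Finite 0) (b := Finite T); simpl; try lra.
  intros; apply HP; lra.
Qed.

Theorem theorem4p1 (T : R) (d : nat) (gam : R) (f h g : R -> R) (m x0 xT : vec) :
  0 < T -> (1 <= d)%nat -> 0 < gam ->
  cont_on 0 T f -> cont_on 0 T h -> cont_on 0 T g ->
  let xs := xstar T gam f h g m x0 xT in
  let us := ustar T gam f h g m xT xs in
  (* the feedback controller u* applied along x* is admissible and generates x* *)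
  admissible_control d T us /\
  is_trajectory d T f h g m x0 us xs /\
  (* and it is optimal among all admissible controls *)
  (forall (u : R -> vec) (x : R -> vec),
      admissible_control d T u -> is_trajectory d T f h g m x0 u x ->
      cost d T gam xT us xs <= cost d T gam xT u x).
Proof.
  intros HT Hd Hgam Hf Hh Hg xs us.
  assert (HT0 : 0 <= T) by lra.
  set (fe := ext T f). set (he := ext T h). set (ge := ext T g).
  assert (Cfe : forall t, continuous fe t) by (apply ext_cont; auto).
  assert (Che : forall t, continuous he t) by (apply ext_cont; auto).
  assert (Cge : forall t, continuous ge t) by (apply ext_cont; auto).
  assert (Efe : forall t, 0 <= t <= T -> f t = fe t) by (intros; unfold fe, ext; rewrite clamp_id; auto).
  assert (Ehe : forall t, 0 <= t <= T -> h t = he t) by (intros; unfold he, ext; rewrite clamp_id; auto).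
  assert (Ege : forall t, 0 <= t <= T -> g t = ge t) by (intros; unfold ge, ext; rewrite clamp_id; auto).
  set (Fe := (fun s => RInt fe 0 s) : R -> R).
  assert (DFe : forall t, is_derive Fe t (fe t)) by (apply RInt_cont_derive; auto).
  assert (Dem : forall t, is_derive (fun s => exp (- Fe s)) t (- fe t * exp (- Fe t))).
  { intros t. auto_derive. - eexists; apply DFe.
    - replace (Derive (fun x => Fe x) t) with (fe t) by (symmetry; apply is_derive_unique; apply DFe). ring. }
  assert (Cem : forall t, continuous (fun s => exp (- Fe s)) t).
  { intros; eapply deriv_cont_R; apply Dem. }
  set (pv := fun s => exp (- Fe s) * ge s).
  set (pH := fun s => exp (- Fe s) * he s).
  set (pG := fun s => pv s * pv s).
  assert (Cpv : forall t, continuous pv t).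
  { intros; apply (continuous_mult (fun s => exp (- Fe s)) ge); auto. }
  assert (CpH : forall t, continuous pH t).
  { intros; apply (continuous_mult (fun s => exp (- Fe s)) he); auto. }
  assert (CpG : forall t, continuous pG t).
  { intros; apply (continuous_mult pv pv); auto. }
  set (He := (fun s => RInt pH 0 s) : R -> R).
  set (Ge := (fun s => RInt pG 0 s) : R -> R).
  assert (DHe : forall t, is_derive He t (pH t)) by (apply RInt_cont_derive; auto).
  assert (DGe : forall t, is_derive Ge t (pG t)) by (apply RInt_cont_derive; auto).
  assert (E1 : forall t, 0 <= t <= T -> fbar f 0 t = Fe t /\ fbar f t T = Fe T - Fe t).
  { intros; unfold fbar, Fe; apply RInt_split; auto. }
  assert (E2 : forall t, 0 <= t <= T -> hbar f h 0 t = He t /\ hbar f h t T = He T - He t).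
  { intros; unfold hbar, He; apply RInt_split; auto.
    intros z Hz. unfold pH. rewrite (proj1 (E1 z Hz)), Ehe by auto. reflexivity. }
  assert (E3 : forall t, 0 <= t <= T -> g2bar f g 0 t = Ge t /\ g2bar f g t T = Ge T - Ge t).
  { intros; unfold g2bar, Ge; apply RInt_split; auto.
    intros z Hz. unfold pG, pv. rewrite (proj1 (E1 z Hz)), Ege by auto.
    replace (-2 * Fe z) with (- Fe z + - Fe z) by ring. rewrite exp_plus; ring. }
  assert (Fe0 : Fe 0 = 0) by (unfold Fe; apply (@RInt_point R_CompleteNormedModule)).
  assert (He0 : He 0 = 0) by (unfold He; apply (@RInt_point R_CompleteNormedModule)).
  assert (Ge0 : Ge 0 = 0) by (unfold Ge; apply (@RInt_point R_CompleteNormedModule)).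
  assert (GTt : forall t, 0 <= t <= T -> 0 <= Ge T - Ge t).
  { intros t Ht. destruct (RInt_split T pG pG CpG (fun _ _ => eq_refl) t Ht) as [_ H2].
    unfold Ge; rewrite <- H2. apply RInt_ge_0; [lra| apply ex_RInt_cont; auto|].
    intros; unfold pG; apply Rle_0_sqr. }
  assert (GT0 : 0 <= Ge T) by (assert (H := GTt 0 ltac:(lra)); rewrite Ge0 in H; lra).
  assert (Hb2 : exp (2 * Fe T) = exp (Fe T) * exp (Fe T)).
  { replace (2 * Fe T) with (Fe T + Fe T) by ring; apply exp_plus. }
  assert (Hbpos : 0 < exp (Fe T)) by apply exp_pos.
  assert (Hig : 0 < / gam) by (apply Rinv_0_lt_compat; auto).
  assert (Hdtpos : forall t, 0 <= t <= T -> 0 < / gam + exp (Fe T) * exp (Fe T) * (Ge T - Ge t)).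
  { intros t Ht. assert (H1 := GTt t Ht). assert (0 <= exp (Fe T) * exp (Fe T) * (Ge T - Ge t)).
    { apply Rmult_le_pos; auto. apply Rmult_le_pos; lra. } lra. }
  assert (Hd0 : 0 < / gam + exp (Fe T) * exp (Fe T) * Ge T).
  { assert (H1 := Hdtpos 0 ltac:(lra)). rewrite Ge0, Rminus_0_r in H1. exact H1. }
  assert (Hdt : forall t, 0 <= t <= T -> dgam T gam f g t = / gam + exp (Fe T) * exp (Fe T) * (Ge T - Ge t)).
  { intros t Ht; unfold dgam. rewrite (proj1 (E1 T ltac:(lra))), (proj2 (E3 t Ht)), Hb2. reflexivity. }
  assert (Hpos0 : 0 <= exp (Fe T) * exp (Fe T) * Ge T * gam).
  { apply Rmult_le_pos; [|lra]. apply Rmult_le_pos; auto. apply Rmult_le_pos; lra. }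
  assert (Hpost : forall t, 0 <= t <= T -> 0 <= exp (Fe T) * exp (Fe T) * (Ge T - Ge t) * gam).
  { intros t Ht. apply Rmult_le_pos; [|lra]. apply Rmult_le_pos; auto. apply Rmult_le_pos; lra. }
  set (d0 := / gam + exp (Fe T) * exp (Fe T) * Ge T) in *.
  set (Kc := fun i => xT i - exp (Fe T) * (x0 i + He T * m i)).
  set (Xf := fun s i => exp (Fe s) * (x0 i + exp (Fe T) * Kc i / d0 * Ge s + m i * He s)).
  assert (HX : forall t i, 0 <= t <= T -> xs t i = Xf t i).
  { intros t i Ht. unfold xs, xstar. rewrite (Hdt t Ht), (Hdt 0 ltac:(lra)), Ge0, Rminus_0_r.
    rewrite (proj1 (E1 t Ht)), (proj1 (E1 T ltac:(lra))), (proj1 (E3 t Ht)),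
      (proj1 (E2 t Ht)), (proj1 (E2 T ltac:(lra))), Hb2.
    assert (Hp2 := Hpost t Ht).
    unfold Xf, Kc, d0 in *. field. repeat split; lra. }
  assert (HU : forall t i, 0 <= t <= T -> us t i = Kc i / d0 * exp (Fe T) * pv t).
  { intros t i Ht. unfold us, ustar. rewrite (HX t i Ht), (Hdt t Ht), (proj2 (E1 t Ht)),
      (proj1 (E1 T ltac:(lra))), (proj2 (E2 t Ht)), (Ege t Ht).
    assert (Hdt' := Hdtpos t Ht).
    assert (Hat : 0 < exp (Fe t)) by apply exp_pos.
    assert (Hex : exp (Fe T - Fe t) = exp (Fe T) * / exp (Fe t)).
    { unfold Rminus. rewrite exp_plus, exp_Ropp. reflexivity. }
    rewrite !Hex. unfold pv. rewrite exp_Ropp.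
    match goal with |- @eq _ ?x ?y => change (@eq R x y) end.
    assert (Hp2 := Hpost t Ht).
    unfold Xf, Kc, d0 in *. field. repeat split; lra. }
  assert (Hadm : admissible_control d T us).
  { intros i Hi. apply (cont_on_eq T _ (fun t => Kc i / d0 * exp (Fe T) * pv t)).
    - intros; apply HU; auto.
    - intros; apply (continuous_mult (fun _ => Kc i / d0 * exp (Fe T)) pv); auto.
      apply continuous_const. }
  assert (DX : forall i t, is_derive (fun s => Xf s i) t
     (fe t * Xf t i + exp (Fe t) * (exp (Fe T) * Kc i / d0 * pG t + m i * pH t))).
  { intros i t. unfold Xf. auto_derive.
    - repeat split; eexists; eauto.
    - replace (Derive (fun x => Fe x) t) with (fe t) by (symmetry; apply is_derive_unique; apply DFe).
      replace (Derive (fun x => Ge x) t) with (pG t) by (symmetry; apply is_derive_unique; apply DGe).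
      replace (Derive (fun x => He x) t) with (pH t) by (symmetry; apply is_derive_unique; apply DHe).
      ring. }
  assert (Htraj : is_trajectory d T f h g m x0 us xs).
  { intros i Hi. split; [|split].
    - apply (cont_on_eq T _ (fun t => Xf t i)).
      + intros; apply HX; auto.
      + intros; eapply deriv_cont_R; apply DX.
    - rewrite (HX 0 i ltac:(lra)). unfold Xf. rewrite Fe0, Ge0, He0, exp_0. ring.
    - intros t Ht. apply (is_derive_ext_loc (fun s => Xf s i)).
      + apply (loc_int T t Ht). intros; symmetry; apply HX; lra.
      + eapply is_derive_eq; [apply DX|].
        rewrite (HX t i ltac:(lra)), (HU t i ltac:(lra)), (Efe t ltac:(lra)),
          (Ehe t ltac:(lra)), (Ege t ltac:(lra)).
        assert (Hat : 0 < exp (Fe t)) by apply exp_pos.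
        unfold pG, pH, pv. rewrite exp_Ropp. toR. unfold Xf, Kc, d0 in *. field. repeat split; lra. }
  split; [exact Hadm|]. split; [exact Htraj|].
  assert (Tend : forall u x i, admissible_control d T u -> is_trajectory d T f h g m x0 u x ->
     (i < d)%nat -> x T i = exp (Fe T) * (x0 i + m i * He T + RInt (fun s => pv s * u s i) 0 T)).
  { intros u x i Hu Hx Hi.
    destruct (Hx i Hi) as [Cx [Hx0 Dx]]. assert (Cu := Hu i Hi).
    assert (Cpvu : cont_on 0 T (fun s => pv s * u s i)).
    { apply cont_on_mult; auto. apply cont_on_cont; auto. }
    assert (Hz : exp (- Fe T) * x T i - exp (- Fe 0) * x 0 i =
       RInt (fun s => exp (- Fe s) * (h s * m i + g s * u s i)) 0 T).
    { apply (ftc T (fun s => exp (- Fe s) * x s i)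
       (fun s => exp (- Fe s) * (h s * m i + g s * u s i)) HT).
      - apply cont_on_mult; auto. apply cont_on_cont; auto.
      - apply cont_on_mult; auto. apply cont_on_cont; auto.
        apply cont_on_plus; auto; apply cont_on_mult; auto; apply cont_on_const.
      - intros t Ht. eapply is_derive_eq.
        + apply (is_derive_mult (fun s => exp (- Fe s)) (fun s => x s i)); [apply Dem| apply Dx; auto|].
          intros; apply Rmult_comm.
        + rewrite (Efe t ltac:(lra)). unfold plus, mult; simpl. toR. ring. }
    rewrite Fe0, Hx0, Ropp_0, exp_0 in Hz.
    rewrite (RInt_ext _ (fun s => m i * pH s + pv s * u s i)) in Hz.
    2:{ rewrite Rmin_left, Rmax_right by lra. intros s Hs. unfold pH, pv.
        rewrite (Ehe s ltac:(lra)), (Ege s ltac:(lra)). toR. ring. }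
    rewrite RInt_plus_R, RInt_scal_R in Hz.
    2: apply ex_RInt_cont; auto.
    2: apply ex_RInt_scal_R, ex_RInt_cont; auto.
    2: apply (cont_on_ex_RInt T _ HT0 Cpvu); lra.
    fold (He T) in Hz.
    rewrite exp_Ropp in Hz.
    assert (Hbp : 0 < exp (Fe T)) by apply exp_pos.
    replace (x T i) with (exp (Fe T) * (/ exp (Fe T) * x T i)) by (field; lra).
    f_equal. lra. }
  intros u x Hu Hx.
  assert (Hsq : forall (w : R -> vec), admissible_control d T w ->
     forall i, (i <= pred d)%nat -> ex_RInt (fun t => (w t i)^2) 0 T).
  { intros w Hw i Hi. apply (cont_on_ex_RInt T _ HT0); try lra.
    apply cont_on_pow2; auto. apply Hw; lia. }
  rewrite !cost_split by (apply Hsq; auto).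
  apply sum_Rle. intros i Hi. assert (Hi' : (i < d)%nat) by lia.
  assert (Cu := Hu i Hi').
  assert (Cpvu : cont_on 0 T (fun s => pv s * u s i)).
  { apply cont_on_mult; auto. apply cont_on_cont; auto. }
  rewrite (Tend u x i Hu Hx Hi'), (HX T i ltac:(lra)).
  set (c := Kc i / d0).
  assert (Hus2 : RInt (fun t => us t i ^ 2) 0 T = (c * exp (Fe T)) ^ 2 * Ge T).
  { rewrite (RInt_ext _ (fun t => (c * exp (Fe T)) ^ 2 * pG t)).
    - rewrite RInt_scal_R; [reflexivity| apply ex_RInt_cont; auto].
    - rewrite Rmin_left, Rmax_right by lra. intros s Hs. rewrite HU by lra. unfold pG, c. toR. ring. }
  set (W := RInt (fun t => u t i ^ 2) 0 T).
  set (J := RInt (fun s => pv s * u s i) 0 T).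
  assert (HQ : 0 <= W - 2 * c * exp (Fe T) * J + (c * exp (Fe T)) ^ 2 * Ge T).
  { assert (HQ0 : 0 <= RInt (fun s => (u s i - us s i) ^ 2) 0 T).
    { apply RInt_ge_0; [lra| |intros; apply pow2_ge_0].
      apply (cont_on_ex_RInt T _ HT0); try lra. apply cont_on_pow2; auto.
      apply cont_on_minus; auto; apply Hadm; auto. }
    rewrite (RInt_ext _ (fun s => (u s i ^ 2 + (-2 * c * exp (Fe T)) * (pv s * u s i))
                                  + (c * exp (Fe T)) ^ 2 * pG s)) in HQ0.
    2:{ rewrite Rmin_left, Rmax_right by lra. intros s Hs. rewrite HU by lra. unfold pG, c. toR. ring. }
    rewrite RInt_plus_R, RInt_plus_R, !RInt_scal_R in HQ0.
    1: fold W J (Ge T) in HQ0; lra.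
    + apply ex_RInt_cont; auto.
    + apply (cont_on_ex_RInt T _ HT0 Cpvu); lra.
    + apply (Hsq u Hu i); lia.
    + apply (ex_RInt_scal_R (fun s => pv s * u s i)). apply (cont_on_ex_RInt T _ HT0 Cpvu); lra.
    + apply (ex_RInt_plus_R (fun s => u s i ^ 2) (fun s => -2 * c * exp (Fe T) * (pv s * u s i))).
      * apply (Hsq u Hu i); lia.
      * apply (ex_RInt_scal_R (fun s => pv s * u s i)). apply (cont_on_ex_RInt T _ HT0 Cpvu); lra.
    + apply (ex_RInt_scal_R pG). apply ex_RInt_cont; auto. }
  rewrite Hus2.
  assert (HKc : Kc i = c * d0) by (unfold c; field; lra).
  set (b := exp (Fe T)) in *.
  set (GT := Ge T) in *.
  assert (Hid : / 2 * W + gam / 2 * (b * (x0 i + m i * He T + J) - xT i) ^ 2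
     - (/ 2 * ((c * b) ^ 2 * GT) + gam / 2 * (b * (x0 i + b * Kc i / d0 * GT + m i * He T) - xT i) ^ 2)
     = / 2 * (W - 2 * c * b * J + (c * b) ^ 2 * GT) + gam / 2 * (b * J - c * b * b * GT) ^ 2).
  { assert (Hx0T : xT i = Kc i + b * (x0 i + He T * m i)) by (unfold Kc; ring).
    rewrite Hx0T. rewrite HKc. unfold d0. field. split; lra. }
  assert (0 <= gam / 2 * (b * J - c * b * b * GT) ^ 2).
  { apply Rmult_le_pos; [lra| apply pow2_ge_0]. }
  unfold Xf. fold GT. fold b. lra.
Qed.
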